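(* Let $K\in\{\mathbb R,\mathbb C,\mathbb H\}$ and let $(E,d)$ be a metric vector space over $K$ such that $d$ is $C_0$-translation invariant and $(C_1,C_2,C_3)$-lipschitz multiplicative. Let $d_0(x,y)=\int_{\mathbb U}d(ux,uy)\,d\mu(u)$, $\delta(x,y)=\lim_{n\to\infty}\frac1n d(nx,ny)$ and $\delta_0(x,y)=\lim_{n\to\infty}\frac1n d_0(nx,ny)$. Then for all $x,y\in E$, $$\delta_0(x,y)=\int_{\mathbb U}\delta(ux,uy)\,d\mu(u).$$
   Context: A metric vector space is a topological vector space over $K$ whose topology is generated by the metric $d$. $\mathbb U=\{u\in K:|u|=1\}$, $\mu$ the right-invariant Haar probability measure on $\mathbb U$. $d$ is $C_0$-translation invariant if $d(x+z,y+z)\le d(x,y)+C_0$ for all $x,y,z$. $(C_1,C_2,C_3)$-lipschitz multiplicative ($C_1\ge1$, $C_2,C_3\ge0$) means $C_1^{-1}|\lambda|d(x,y)-C_2|\lambda|-C_3\le d(\lambda x,\lambda y)\le C_1|\lambda|d(x,y)+C_2|\lambda|+C_3$ for all $\lambda\in K$, $x,y\in E$. (Under these hypotheses the limits defining $\delta,\delta_0$ exist.) *)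

(* Defs.v *)
From HB Require Import structures.
From mathcomp Require Import all_boot all_order all_algebra.
From mathcomp Require Import all_classical all_reals all_analysis.
Set Implicit Arguments. Unset Strict Implicit. Unset Printing Implicit Defensive.
Import Order.TTheory GRing.Theory Num.Theory.
Import numFieldNormedType.Exports.
Local Open Scope classical_set_scope.
Local Open Scope ring_scope.

(* The scalar field K in {R, C, H} is realised inside the Hamilton
   quaternions H = R^4 (components (q0,q1),(q2,q3), q = q0 + q1 i + q2 j + q3 k):
   R = {q1 = q2 = q3 = 0}, C = {q2 = q3 = 0}, H = everything.
   H carries the product (Borel) sigma-algebra of R^4. *)
Definition quat (R : realType) := ((R * R) * (R * R))%type.

Inductive scalars := KR | KC | KH.

Section Quat.
Variable R : realType.
Implicit Types p q : quat R.

Definition q0 q := q.1.1.  Definition q1 q := q.1.2.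
Definition q2 q := q.2.1.  Definition q3 q := q.2.2.
Definition mkq (a b c e : R) : quat R := ((a, b), (c, e)).

Definition qadd p q := mkq (q0 p + q0 q) (q1 p + q1 q) (q2 p + q2 q) (q3 p + q3 q).
Definition qsub p q := mkq (q0 p - q0 q) (q1 p - q1 q) (q2 p - q2 q) (q3 p - q3 q).
Definition qmul p q := mkq
  (q0 p * q0 q - q1 p * q1 q - q2 p * q2 q - q3 p * q3 q)
  (q0 p * q1 q + q1 p * q0 q + q2 p * q3 q - q3 p * q2 q)
  (q0 p * q2 q - q1 p * q3 q + q2 p * q0 q + q3 p * q1 q)
  (q0 p * q3 q + q1 p * q2 q - q2 p * q1 q + q3 p * q0 q).
Definition qone : quat R := mkq 1 0 0 0.
Definition qnat (n : nat) : quat R := mkq n%:R 0 0 0.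
Definition qnorm q := Num.sqrt (q0 q ^+ 2 + q1 q ^+ 2 + q2 q ^+ 2 + q3 q ^+ 2).

Definition inK (k : scalars) q : Prop :=
  match k with
  | KR => q1 q = 0 /\ q2 q = 0 /\ q3 q = 0
  | KC => q2 q = 0 /\ q3 q = 0
  | KH => True
  end.

Definition unitK (k : scalars) : set (quat R) := [set u | inK k u /\ qnorm u = 1].
End Quat.

Section MVS.
Variables (R : realType) (k : scalars) (E : zmodType).
Variable scal : quat R -> E -> E.
Variable d : E -> E -> R.

(* E is a (left) K-vector space via scal (only scalars in K matter) *)
Definition is_Kmodule : Prop :=
  (forall a x y, inK k a -> scal a (x + y) = scal a x + scal a y) /\
  (forall a b x, inK k a -> inK k b -> scal (qadd a b) x = scal a x + scal b x) /\
  (forall a b x, inK k a -> inK k b -> scal (qmul a b) x = scal a (scal b x)) /\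
  (forall x, scal (@qone R) x = x).

Definition is_metric : Prop :=
  (forall x y, 0 <= d x y) /\ (forall x y, d x y = 0 <-> x = y) /\
  (forall x y, d x y = d y x) /\ (forall x y z, d x z <= d x y + d y z).

Definition tvs_metric_topology : Prop :=
  (forall x y (e : R), 0 < e -> exists2 r : R, 0 < r &
     forall x' y', d x x' < r -> d y y' < r -> d (x + y) (x' + y') < e) /\
  (forall a x (e : R), inK k a -> 0 < e -> exists2 r : R, 0 < r &
     forall a' x', inK k a' -> qnorm (qsub a a') < r -> d x x' < r ->
       d (scal a x) (scal a' x') < e).

Definition metric_vector_space : Prop :=
  [/\ is_Kmodule, is_metric & tvs_metric_topology].

Definition translation_invariant (C0 : R) : Prop :=
  forall x y z, d (x + z) (y + z) <= d x y + C0.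

Definition lipschitz_multiplicative (C1 C2 C3 : R) : Prop :=
  [/\ 1 <= C1, 0 <= C2, 0 <= C3 &
   forall l x y, inK k l ->
     C1^-1 * qnorm l * d x y - C2 * qnorm l - C3 <= d (scal l x) (scal l y) /\
     d (scal l x) (scal l y) <= C1 * qnorm l * d x y + C2 * qnorm l + C3].

(* right-invariant (Haar) probability measure on U, viewed as a probability
   on H concentrated on U *)
Definition right_invariant_haar (mu : probability (quat R) R) : Prop :=
  mu (@unitK R k) = 1%E /\
  forall v A, @unitK R k v -> measurable A ->
    mu ((fun u => qmul u v) @^-1` A) = mu A.

Definition d0 (mu : probability (quat R) R) (x y : E) : R :=
  Rintegral mu (@unitK R k) (fun u => d (scal u x) (scal u y)).

Definition delta (x y : E) : R :=
  limn (fun n : nat => d (scal (@qnat R n) x) (scal (@qnat R n) y) / n%:R).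

Definition delta0 (mu : probability (quat R) R) (x y : E) : R :=
  limn (fun n : nat => d0 mu (scal (@qnat R n) x) (scal (@qnat R n) y) / n%:R).
End MVS.

(* Main.v *)
Require Import Defs.
From HB Require Import structures.
From mathcomp Require Import all_boot all_order all_algebra.
From mathcomp Require Import all_classical all_reals all_analysis.
From mathcomp Require Import ring lra measurable_realfun.
Import Order.TTheory GRing.Theory Num.Theory.
Import numFieldNormedType.Exports.
Local Open Scope classical_set_scope.
Local Open Scope ring_scope.
Set Implicit Arguments. Unset Strict Implicit. Unset Printing Implicit Defensive.
Lemma fekete (R : realType) (a : nat -> R) (C : R) :
  0 <= C -> (forall n, 0 <= a n) -> (forall m n, a (m + n)%N <= a m + a n + C) ->
  (fun n => a n / n%:R) @ \oo --> inf [set (a n + C) / n%:R | n in [set n | (0 < n)%N]].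
Proof.
move=> C0 a0 sub.
set S := [set _ | _ in _]; set L := inf S.
have lbS : has_lbound S.
  by exists 0 => _ [n _ <-]; apply: divr_ge0; [apply: addr_ge0|apply: ler0n].
have hinf : has_inf S by split => //; exists ((a 1%N + C) / 1%:R); exists 1%N.
have Lle n : (0 < n)%N -> L <= (a n + C) / n%:R.
  by move=> n0; apply: ge_inf => //; exists n.
have iter m q r : a (q * m + r)%N <= q%:R * (a m + C) + a r.
  elim: q => [|q IH]; first by rewrite mul0n add0n mul0r add0r.
  rewrite mulSn -addnA; apply: (le_trans (sub _ _)).
  rewrite -natr1; lra.
apply/cvgrPdist_lt => e e0.
have e30 : 0 < e / 3 by apply: divr_gt0.
have [_ [m m0 <-] hm] := inf_adherent e30 hinf.
set M := \sum_(r < m) a r.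
have aM r : (r < m)%N -> a r <= M.
  move=> rm; rewrite /M (bigD1 (Ordinal rm)) //= lerDl.
  by apply: sumr_ge0 => i _.
have M0 : 0 <= M by apply: sumr_ge0 => i _.
have Bp : 0 <= (M + C) * 3 / e.
  apply: divr_ge0; last exact: ltW. apply: mulr_ge0; lra.
exists (Num.bound ((M + C) * 3 / e)).+1 => // n /= Nn.
have n0 : (0 < n)%N by apply: leq_trans Nn.
have np : 0 < n%:R :> R by rewrite ltr0n.
have hB : (M + C) * 3 / e < n%:R.
  apply: (lt_le_trans (archi_boundP Bp)); rewrite ler_nat; exact: ltnW.
have ZY : M / n%:R + C / n%:R < e / 3.
  rewrite -mulrDl ltr_pdivrMr // .
  move: hB; rewrite ltr_pdivrMr //; lra.
have low := Lle n n0.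
have hdiv := divn_eq n m.
have rm : (n %% m < m)%N by rewrite ltn_pmod.
have an : a n <= (n %/ m)%:R * (a m + C) + M.
  rewrite {1}hdiv; apply: (le_trans (iter _ _ _)); rewrite lerD2l; exact: aM.
have qm : ((n %/ m) * m <= n)%N by rewrite {2}hdiv leq_addr.
have amC : 0 <= a m + C by apply: addr_ge0.
have mp : 0 < m%:R :> R by rewrite ltr0n.
have up : a n / n%:R <= (a m + C) / m%:R + M / n%:R.
  rewrite ler_pdivrMr // mulrDl divfK ?gt_eqF //.
  apply: (le_trans an); rewrite lerD2r.
  have WE : a m + C = (a m + C) / m%:R * m%:R by rewrite divfK ?gt_eqF.
  have W0 : 0 <= (a m + C) / m%:R by apply: divr_ge0 => //; apply: ltW.
  have qmR : (n %/ m)%:R * m%:R <= n%:R :> R by rewrite -natrM ler_nat.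
  rewrite {1}WE; move: W0 qmR; set W := (a m + C) / m%:R; set q := (n %/ m)%:R.
  move=> W0 qmR; nra.
have : (a n + C) / n%:R = a n / n%:R + C / n%:R by rewrite mulrDl.
move: low up hm ZY; set X := a n / n%:R; set Y := C / n%:R; set Z := M / n%:R.
set W := (a m + C) / m%:R => low up hm ZY YE.
have Y0 : 0 <= Y by apply: divr_ge0 => //; apply: ler0n.
have Z0 : 0 <= Z by apply: divr_ge0 => //; apply: ler0n.
rewrite YE in low.
rewrite ltr_distlC; apply/andP; split; lra.
Qed.
Section Q.
Variable R : realType.

Lemma qnat_inK k n : inK k (qnat R n).
Proof. by case: k; rewrite /inK /q1 /q2 /q3 /qnat /mkq. Qed.

Lemma qnat_add m n : qnat R (m + n) = qadd (qnat R m) (qnat R n).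
Proof. by rewrite /qadd /qnat /mkq /q0 /q1 /q2 /q3 /= natrD !addr0. Qed.

Lemma qnat1 : qnat R 1 = qone R.
Proof. by []. Qed.

Lemma qmul_nat_comm u n : qmul u (qnat R n) = qmul (qnat R n) u.
Proof.
rewrite /qmul /qnat /mkq /q0 /q1 /q2 /q3 /=.
by congr (_, _); congr (_, _); ring.
Qed.

Lemma mq0 : measurable_fun setT (@q0 R).
Proof. exact: measurableT_comp measurable_fst measurable_fst. Qed.
Lemma mq1 : measurable_fun setT (@q1 R).
Proof. exact: measurableT_comp measurable_snd measurable_fst. Qed.
Lemma mq2 : measurable_fun setT (@q2 R).
Proof. exact: measurableT_comp measurable_fst measurable_snd. Qed.
Lemma mq3 : measurable_fun setT (@q3 R).
Proof. exact: measurableT_comp measurable_snd measurable_snd. Qed.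

Lemma mpre (f : quat R -> R) (A : set R) :
  measurable_fun setT f -> measurable A -> measurable (f @^-1` A).
Proof. by move=> mf mA; rewrite -[_ @^-1` _]setTI; apply: mf. Qed.

Lemma measurable_inK k : measurable [set u : quat R | inK k u].
Proof.
case: k => /=.
- rewrite (_ : [set u | _] = (@q1 R) @^-1` [set 0] `&` ((@q2 R) @^-1` [set 0] `&` (@q3 R) @^-1` [set 0])); last by [].
  by repeat apply: measurableI; apply: mpre; [exact: mq1|exact: measurable_set1|exact: mq2|exact: measurable_set1|exact: mq3|exact: measurable_set1].
- rewrite (_ : [set u | _] = (@q2 R) @^-1` [set 0] `&` (@q3 R) @^-1` [set 0]); last by [].
  by apply: measurableI; apply: mpre; [exact: mq2|exact: measurable_set1|exact: mq3|exact: measurable_set1].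
- by rewrite (_ : [set u | _] = setT).
Qed.

Definition qs (q : quat R) := q0 q ^+ 2 + q1 q ^+ 2 + q2 q ^+ 2 + q3 q ^+ 2.

Lemma mqs : measurable_fun setT qs.
Proof.
apply: measurable_funD; [apply: measurable_funD; [apply: measurable_funD|]|];
  apply: measurable_funX; [exact: mq0|exact: mq1|exact: mq2|exact: mq3].
Qed.

Lemma measurable_unitK k : measurable (@unitK R k).
Proof.
rewrite (_ : unitK k = [set u : quat R | inK k u] `&` qs @^-1` [set 1]).
  by apply: measurableI; [exact: measurable_inK|apply: mpre; [exact: mqs|exact: measurable_set1]].
apply/seteqP; split => u [Ku Nu]; split => //=.
  have s0 : 0 <= qs u by rewrite /qs; repeat apply: addr_ge0; apply: sqr_ge0.
  by rewrite -(sqr_sqrtr s0); move: Nu; rewrite /qnorm => ->; rewrite expr1n.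
by rewrite /qnorm; move: Nu; rewrite /qs /= => ->; rewrite sqrtr1.
Qed.

Lemma qnorm_small u v (r : R) : 0 < r ->
  `|q0 u - q0 v| < r / 4 -> `|q1 u - q1 v| < r / 4 ->
  `|q2 u - q2 v| < r / 4 -> `|q3 u - q3 v| < r / 4 -> qnorm (qsub u v) < r.
Proof.
move=> r0 h0 h1 h2 h3.
have sq (z : R) : `|z| < r / 4 -> z ^+ 2 < r ^+ 2 / 4.
  move=> hz; move: hz; rewrite ltr_norml => /andP[hz1 hz2].
  rewrite expr2; nra.
rewrite /qnorm /qsub /mkq /q0 /q1 /q2 /q3 /=.
rewrite -[X in _ < X](@ger0_norm _ r) ?ltW // -sqrtr_sqr ltr_sqrt ?exprn_gt0 //.
move: (sq _ h0) (sq _ h1) (sq _ h2) (sq _ h3); rewrite /q0 /q1 /q2 /q3; lra.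
Qed.
End Q.

Section Main.
Variables (R : realType) (k : scalars) (E : zmodType).
Variables (scal : quat R -> E -> E) (d : E -> E -> R) (C0 C1 C2 C3 : R).
Hypothesis hmvs : metric_vector_space k scal d.
Hypothesis hti : translation_invariant d C0.
Hypothesis hlip : lipschitz_multiplicative k scal d C1 C2 C3.

Let hmod : is_Kmodule k scal. Proof. by case: hmvs. Qed.
Let hmet : is_metric d. Proof. by case: hmvs. Qed.
Let htop : tvs_metric_topology k scal d. Proof. by case: hmvs. Qed.

Lemma d_ge0 X Y : 0 <= d X Y. Proof. by case: hmet. Qed.
Lemma d_xx X : d X X = 0. Proof. by case: hmet => _ [h _]; apply/h. Qed.
Lemma d_sym X Y : d X Y = d Y X. Proof. by case: hmet => _ [_ []]. Qed.
Lemma d_tri X Y Z : d X Z <= d X Y + d Y Z. Proof. by case: hmet => _ [_ []]. Qed.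

Lemma C0_ge0 : 0 <= C0.
Proof. have := hti 0 0 0; rewrite addr0 d_xx; lra. Qed.

Lemma scal_nat_add m n X :
  scal (qnat R (m + n)) X = scal (qnat R m) X + scal (qnat R n) X.
Proof. by case: hmod => _ [h _]; rewrite qnat_add; apply: h; apply: qnat_inK. Qed.

Lemma scal_nat0 X : scal (qnat R 0) X = 0.
Proof.
have h := scal_nat_add 0 0 X; rewrite addn0 in h.
by apply: (addrI (scal (qnat R 0) X)); rewrite addr0 -h.
Qed.

Lemma scal_nat1 X : scal (qnat R 1) X = X.
Proof. by case: hmod => _ [_ [_ h]]; rewrite qnat1. Qed.

Lemma scal_comm u n X : inK k u ->
  scal u (scal (qnat R n) X) = scal (qnat R n) (scal u X).
Proof.
case: hmod => _ [_ [h _]] Ku.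
rewrite -(h u (qnat R n) X Ku (@qnat_inK R k n)) qmul_nat_comm.
exact: h (@qnat_inK R k n) Ku.
Qed.

Definition aseq X Y n := d (scal (qnat R n) X) (scal (qnat R n) Y).

Lemma aseq_sub X Y m n : aseq X Y (m + n) <= aseq X Y m + aseq X Y n + 2 * C0.
Proof.
rewrite /aseq !scal_nat_add.
set A := scal _ X; set B := scal _ X; set A' := scal _ Y; set B' := scal _ Y.
apply: (le_trans (d_tri _ (A' + B) _)).
have h1 := hti A A' B.
have h2 := hti B B' A'.
rewrite [B + A']addrC [B' + A']addrC in h2.
lra.
Qed.

Lemma delta_cvg X Y :
  (fun n => aseq X Y n / n%:R) @ \oo --> delta scal d X Y.
Proof.
have h := fekete (mulr_ge0 (ler0n _ 2) C0_ge0) (fun n => d_ge0 _ _) (aseq_sub X Y).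
rewrite /delta -/(aseq X Y).
by rewrite (cvg_lim _ h).
Qed.

Lemma aseq_bound X Y n : aseq X Y n / n%:R <= d X Y + 2 * C0.
Proof.
have hb : aseq X Y n <= n%:R * (d X Y + 2 * C0).
  elim: n => [|n IH]; first by rewrite /aseq !scal_nat0 d_xx mul0r.
  rewrite -add1n; apply: (le_trans (aseq_sub _ _ _ _)).
  rewrite /aseq !scal_nat1 -/(aseq X Y n) -natr1; lra.
have c0 := C0_ge0; have dxy := d_ge0 X Y.
case: n hb => [|n] hb; first by rewrite invr0 mulr0; lra.
rewrite ler_pdivrMr ?ltr0n // mulrC //.
Qed.

Lemma lip_unit u X Y : unitK k u -> d (scal u X) (scal u Y) <= C1 * d X Y + C2 + C3.
Proof.
case=> Ku Nu; case: hlip => _ _ _ h.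
by have [_] := h u X Y Ku; rewrite Nu !mulr1.
Qed.


Lemma G_cont u X Y (e : R) : inK k u -> 0 < e -> exists2 r, 0 < r &
  forall v, inK k v -> qnorm (qsub u v) < r ->
    d (scal u X) (scal u Y) < d (scal v X) (scal v Y) + e.
Proof.
move=> Ku e0; case: htop => _ h.
have e2 : 0 < e / 2 by apply: divr_gt0.
have [r1 r10 h1] := h u X _ Ku e2.
have [r2 r20 h2] := h u Y _ Ku e2.
exists (Order.min r1 r2); first by rewrite lt_min r10 r20.
move=> v Kv; rewrite lt_min => /andP[v1 v2].
have a1 := h1 v X Kv v1; rewrite d_xx in a1; have {a1} a1 := a1 r10.
have a2 := h2 v Y Kv v2; rewrite d_xx in a2; have {a2} a2 := a2 r20.
have t1 := d_tri (scal u X) (scal v X) (scal u Y).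
have t2 := d_tri (scal v X) (scal v Y) (scal u Y).
rewrite (d_sym (scal v Y)) in t2.
lra.
Qed.

Lemma ballR (x e y : R) : ball x e y = (`|x - y| < e) :> Prop.
Proof. by rewrite -ball_normE. Qed.

Lemma close3 (a b c rho : R) : `|c - a| < rho -> `|c - b| < rho -> `|a - b| < 2 * rho.
Proof.
rewrite !ltr_norml => /andP[h1 h2] /andP[h3 h4]; apply/andP; split; lra.
Qed.

Lemma measurable_G X Y : measurable_fun (unitK k) (fun u => d (scal u X) (scal u Y)).
Proof.
move=> mU; apply: (measurability _ (RGenOInfty.measurableE R)) => //.
move=> /= _ [_ [t ->] <-].
set G := fun u => d (scal u X) (scal u Y).
pose box (c0 c1 c2 c3 r : rat) : set (quat R) :=
  (@q0 R) @^-1` ball (@ratr R c0) (@ratr R r) `&` (@q1 R) @^-1` ball (@ratr R c1) (@ratr R r) `&`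
  (@q2 R) @^-1` ball (@ratr R c2) (@ratr R r) `&` (@q3 R) @^-1` ball (@ratr R c3) (@ratr R r).
pose P c0 c1 c2 c3 r := if pselect (forall v, box c0 c1 c2 c3 r v -> unitK k v -> t < G v)
  then box c0 c1 c2 c3 r else set0.
rewrite (_ : unitK k `&` G @^-1` `]t, +oo[%classic = unitK k `&` \bigcup_c0 \bigcup_c1 \bigcup_c2 \bigcup_c3 \bigcup_r P c0 c1 c2 c3 r).
  apply: measurableI => //.
  apply: bigcupT_measurable_rat => a0; apply: bigcupT_measurable_rat => a1.
  apply: bigcupT_measurable_rat => a2; apply: bigcupT_measurable_rat => a3.
  apply: bigcupT_measurable_rat => a4.
  rewrite /P; case: pselect => [h|h]; last exact: measurable0.
  by repeat apply: measurableI; apply: mpre;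
    (exact: mq0 || exact: mq1 || exact: mq2 || exact: mq3 || exact: measurable_ball).
apply/seteqP; split => u.
- move=> [Uu]; rewrite /preimage /= in_itv /= andbT => tG; split => //.
  have e0 : 0 < G u - t by rewrite subr_gt0.
  have [r r0 hr] := G_cont X Y Uu.1 e0.
  have r8 : 0 < r / 8 by apply: divr_gt0.
  have [rho] := rat_in_itvoo r8; rewrite in_itv /= => /andP[rho0 rho8].
  have cc (z : R) : exists c : rat, `|ratr c - z| < ratr rho.
    have [c] := @rat_in_itvoo R (z - ratr rho) (z + ratr rho) ltac:(lra).
    rewrite in_itv /= => /andP[c1 c2]; exists c; rewrite ltr_norml; apply/andP; split; lra.
  have [c0 h0] := cc (q0 u); have [c1 h1] := cc (q1 u).
  have [c2 h2] := cc (q2 u); have [c3 h3] := cc (q3 u).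
  exists c0 => //; exists c1 => //; exists c2 => //; exists c3 => //; exists rho => //.
  rewrite /P; case: pselect => [h|nH].
    by rewrite /box /preimage /= !ballR.
  exfalso; apply: nH => v; rewrite /box /preimage /= !ballR => -[[[v0 v1] v2] v3] Uv.
  have : G u < G v + (G u - t).
    apply: hr; first by case: Uv.
    apply: qnorm_small => //.
    + by apply: (lt_le_trans (close3 h0 v0)); lra.
    + by apply: (lt_le_trans (close3 h1 v1)); lra.
    + by apply: (lt_le_trans (close3 h2 v2)); lra.
    + by apply: (lt_le_trans (close3 h3 v3)); lra.
  lra.
- move=> [Uu [c0 _ [c1 _ [c2 _ [c3 _ [r _ Pu]]]]]].
  move: Pu; rewrite /P; case: pselect => [H|nH] Bu; last by [].
  split => //.
  by rewrite /preimage /= in_itv /= andbT; exact (H u Bu Uu).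
Qed.

End Main.

Unset Implicit Arguments.
Set Strict Implicit.

Theorem proposition3 (R : realType) (k : scalars) (E : zmodType)
  (scal : quat R -> E -> E) (d : E -> E -> R)
  (C0 C1 C2 C3 : R) (mu : probability (quat R) R) :
  metric_vector_space k scal d ->
  translation_invariant d C0 ->
  lipschitz_multiplicative k scal d C1 C2 C3 ->
  right_invariant_haar k mu ->
  forall x y : E,
    ((delta0 k scal d mu x y)%:E =
      \int[mu]_(u in @unitK R k) (delta scal d (scal u x) (scal u y))%:E)%E.
Proof.
move=> hmvs hti hlip _ x y.
have mU := @measurable_unitK R k.
pose fr n u := aseq scal d (scal u x) (scal u y) n / n%:R.
pose Gn n u := d (scal u (scal (qnat R n) x)) (scal u (scal (qnat R n) y)).
pose B := C1 * d x y + C2 + C3 + 2 * C0.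
have c0 := C0_ge0 hmvs hti.
have mGn n : measurable_fun (unitK k) (Gn n) by exact: (measurable_G hmvs).
have frE n u : unitK k u -> fr n u = Gn n u / n%:R.
  by case=> Ku _; rewrite /fr /Gn /aseq !(scal_comm hmvs).
have mfr n : measurable_fun (unitK k) (fr n).
  apply: (@eq_measurable_fun _ _ _ _ _ (fun u => Gn n u * n%:R^-1)).
    by move=> u; rewrite inE => Uu; rewrite frE.
  by apply: measurable_funM => //; exact: measurable_cst.
have frcvg u : fr ^~ u @ \oo --> delta scal d (scal u x) (scal u y).
  exact: (delta_cvg hmvs hti).
have mf : measurable_fun (unitK k) (fun u => delta scal d (scal u x) (scal u y)).
  exact: (measurable_fun_cvg (f := fun u => delta scal d (scal u x) (scal u y)) mfr (fun u _ => frcvg u)).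
have fr0 n u : 0 <= fr n u.
  by apply: divr_ge0; [exact: (d_ge0 hmvs)|exact: ler0n].
have frB n u : unitK k u -> fr n u <= B.
  move=> Uu; apply: (le_trans (aseq_bound hmvs hti _ _ _)).
  have := lip_unit hlip x y Uu; rewrite /B; lra.
have B0 : 0 <= B.
  case: hlip => C1ge C2ge C3ge _; have := d_ge0 hmvs x y; rewrite /B => dge.
  have : 0 <= C1 * d x y by apply: mulr_ge0 => //; lra.
  lra.
have hfg : {ae mu, forall u n, unitK k u -> (`|(fr n u)%:E| <= (fun _ => B%:E) u)%E}.
  apply: aeW => u n Uu /=; rewrite lee_fin ger0_norm //; exact: frB.
have hff : {ae mu, forall u, unitK k u ->
    (fun n => (fr n u)%:E) @ \oo --> (delta scal d (scal u x) (scal u y))%:E}.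
  apply: aeW => u Uu; apply/fine_cvgP; split; first exact: nearW.
  exact: frcvg.
have [intf _ cv] := @dominated_convergence _ _ R mu (unitK k) mU
  (fun n u => (fr n u)%:E) (fun u => (delta scal d (scal u x) (scal u y))%:E)
  (fun _ => B%:E) (fun n => proj2 (measurable_EFinP _ _) (mfr n))
  (proj2 (measurable_EFinP _ _) mf) hff
  (@finite_measure_integrable_cst _ _ R mu _ B mU) hfg.
have intGn n : mu.-integrable (unitK k) (EFin \o Gn n).
  apply: (le_integrable mU _ _ (@finite_measure_integrable_cst _ _ R mu _
    (C1 * d (scal (qnat R n) x) (scal (qnat R n) y) + C2 + C3) mU)).
    exact/measurable_EFinP.
  move=> u Uu /=; rewrite lee_fin ger0_norm; last exact: (d_ge0 hmvs).
  apply: (le_trans (lip_unit hlip _ _ Uu)); rewrite ler_norm //.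
have seqE n : d0 k scal d mu (scal (qnat R n) x) (scal (qnat R n) y) / n%:R =
    fine (\int[mu]_(u in unitK k) (fr n u)%:E)%E.
  rewrite /d0 -(RintegralZr _ mU (intGn n)) /Rintegral; congr fine.
  by apply: eq_integral => u; rewrite inE => Uu; rewrite frE.
have fin : (\int[mu]_(u in unitK k) (delta scal d (scal u x) (scal u y))%:E)%E \is a fin_num.
  exact: integrable_fin_num.
rewrite -(fineK fin) in cv.
have h : (fun n => fine (\int[mu]_(u in unitK k) (fr n u)%:E)%E) @ \oo -->
    fine (\int[mu]_(u in unitK k) (delta scal d (scal u x) (scal u y))%:E)%E.
  exact: (fine_cvg cv).
rewrite /delta0 (_ : (fun n => _) = (fun n => fine (\int[mu]_(u in unitK k) (fr n u)%:E)%E)).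
  rewrite (cvg_lim _ h); [exact: fineK | exact: norm_hausdorff].
by apply: funext => n; rewrite seqE.
Qed.
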